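(* Consider control protocol (C4) with $r_1=\cdots=r_n\in[\frac1{n-1},1)$, and let $c_\eta=\frac{2\eta(n-1)}{n}$. If $\eta\le\frac{nr_1}{2(n-1)}$, then for any $\varepsilon>0$ the set $E'_\varepsilon=\{(x_1,\dots,x_n)\in[0,1]^n: c_\eta-\varepsilon\le\max_{i,j}|x_i-x_j|\le c_\eta\}$ is finite-time robustly reachable from $[0,1]^n$.
   Context: Fix $n\ge3$, $\mathcal V=\{1,\dots,n\}$, confidence thresholds $r_i\in(0,1]$, $\eta>0$. States $x(t)\in[0,1]^n$. Neighbor set $\mathcal N_i(t)=\{j:|x_j(t)-x_i(t)|\le r_i\}$ (contains $i$), $\Pi_{[0,1]}(y)=\min\{1,\max\{0,y\}\}$. Control protocol (C4): $x_i(t+1)=\Pi_{[0,1]}\big(|\mathcal N_i(t)|^{-1}[x_i(t)+\sum_{j\in\mathcal N_i(t)\setminus\{i\}}(x_j(t)+u_{ji}(t)+b_{ji}(t))]\big)$, where for $j\in\mathcal N_i(t)\setminus\{i\}$: $\delta_i(t)\in(0,\eta)$ is a chosen parameter, $u_{ji}(t)\in[-\eta+\delta_i(t),\eta-\delta_i(t)]$ a chosen control input, $b_{ji}(t)\in[-\delta_i(t),\delta_i(t)]$ an arbitrary uncertainty; the choices may depend on $x(0),\dots,x(t)$. A set $S\subseteq[0,1]^n$ is finite-time robustly reachable from $[0,1]^n$ under the protocol if there exist constants $T>0$ and $\varepsilon'\in(0,\eta)$ such that for every $x(0)\in[0,1]^n$, either $x(0)\in S$, or one can choose $\delta_i(t)\in[\varepsilon',\eta)$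 and $u_{ji}(t)\in[-\eta+\delta_i(t),\eta-\delta_i(t)]$ ($0\le t<T$, $i\in\mathcal V$, $j\in\mathcal N_i(t)\setminus\{i\}$) guaranteeing that for arbitrary $b_{ji}(t)\in[-\delta_i(t),\delta_i(t)]$ there is $t\in[1,T]$ with $x(t)\in S$. *)

(* Defs.v *)
From Stdlib Require Import Reals Lra Lia List.
Import ListNotations.
Open Scope R_scope.

(* Agents are indexed 0..n-1 (paper: 1..n). A state is x : nat -> R,
   only the coordinates i < n are meaningful. *)
Definition state := nat -> R.

Definition proj01 (y : R) : R := Rmin 1 (Rmax 0 y).

Definition nbrs (n : nat) (r : nat -> R) (x : state) (i : nat) : list nat :=
  filter (fun j => if Rle_dec (Rabs (x j - x i)) (r i) then true else false)
         (seq 0 n).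

Definition sumR (l : list nat) (f : nat -> R) : R :=
  fold_right (fun j acc => f j + acc) 0 l.

Definition step (n : nat) (r : nat -> R) (x : state)
    (u b : nat -> nat -> R) : state :=
  fun i =>
    let N := nbrs n r x i in
    proj01 ((x i + sumR (filter (fun j => negb (Nat.eqb j i)) N)
                        (fun j => x j + u j i + b j i))
            / INR (length N)).

(* Feedback control: delta t h i = delta_i(t), u t h j i = u_{ji}(t), where
   h is the history up to time t (h s = x(s) for s <= t, h s = x(t) for s > t). *)
Fixpoint hist (n : nat) (r : nat -> R) (x0 : state)
    (u : nat -> (nat -> state) -> nat -> nat -> R)
    (b : nat -> nat -> nat -> R) (t : nat) : nat -> state :=
  match t with
  | O => fun _ => x0
  | S t' =>
      let h := hist n r x0 u b t' in
      fun s => if Nat.leb s t' then h s else step n r (h t') (u t' h) (b t')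
  end.

Definition traj n r x0 u b (t : nat) : state := hist n r x0 u b t t.

Definition in_cube (n : nat) (x : state) : Prop :=
  forall i, (i < n)%nat -> 0 <= x i <= 1.

Definition robustly_reachable (n : nat) (r : nat -> R) (eta : R)
    (S : state -> Prop) : Prop :=
  exists T : nat, (0 < T)%nat /\
  exists eps' : R, 0 < eps' < eta /\
  forall x0 : state, in_cube n x0 ->
    S x0 \/
    exists (delta : nat -> (nat -> state) -> nat -> R)
           (u : nat -> (nat -> state) -> nat -> nat -> R),
      (forall t h i j, (t < T)%nat -> (i < n)%nat -> (j < n)%nat ->
         eps' <= delta t h i < eta /\
         - eta + delta t h i <= u t h j i <= eta - delta t h i) /\
      forall b : nat -> nat -> nat -> R,
        (forall t i j, (t < T)%nat -> (i < n)%nat -> (j < n)%nat ->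
           - delta t (hist n r x0 u b t) i <= b t j i
             <= delta t (hist n r x0 u b t) i) ->
        exists t : nat, (1 <= t <= T)%nat /\ S (traj n r x0 u b t).

Definition spread (n : nat) (x : state) : R :=
  fold_right Rmax 0
    (flat_map (fun i => map (fun j => Rabs (x i - x j)) (seq 0 n)) (seq 0 n)).

Definition c_eta (n : nat) (eta : R) : R := 2 * eta * (INR n - 1) / INR n.

Definition E' (n : nat) (eta eps : R) (x : state) : Prop :=
  in_cube n x /\ c_eta n eta - eps <= spread n x <= c_eta n eta.

(* Main.v *)
Require Import Defs.
From Stdlib Require Import Reals Lra Lia List Classical Bool.
Import ListNotations.
Open Scope R_scope.
Open Scope bool_scope.

Lemma filter_notin (i : nat) (l : list nat) :
  ~ In i l -> filter (fun j => negb (Nat.eqb j i)) l = l.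
Proof.
  induction l as [|a l IH]; simpl; intros H; auto.
  destruct (Nat.eqb_spec a i); [exfalso; apply H; auto|].
  simpl; f_equal; apply IH; intuition.
Qed.

Lemma sumR_app_elem (f : nat -> R) (i : nat) (l : list nat) :
  NoDup l -> In i l ->
  length l = S (length (filter (fun j => negb (Nat.eqb j i)) l)) /\
  sumR l f = f i + sumR (filter (fun j => negb (Nat.eqb j i)) l) f.
Proof.
  induction l as [|a l IH]; simpl; intros Hnd Hin; [contradiction|].
  inversion Hnd; subst.
  destruct (Nat.eqb_spec a i).
  - subst. simpl. rewrite filter_notin by auto. split; auto.
  - destruct Hin as [Hin|Hin]; [congruence|].
    destruct (IH H2 Hin) as [E1 E3]. simpl. rewrite E1, E3. split; auto. lra.
Qed.

Lemma sumR_cons (a : nat) (l : list nat) (f : nat -> R) :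
  sumR (a :: l) f = f a + sumR l f.
Proof. reflexivity. Qed.
Lemma sumR_nil (f : nat -> R) : sumR [] f = 0.
Proof. reflexivity. Qed.
Lemma length_cons' {A} (a : A) l : length (a :: l) = S (length l).
Proof. reflexivity. Qed.

Lemma sumR_plus (l : list nat) (f g : nat -> R) :
  sumR l (fun j => f j + g j) = sumR l f + sumR l g.
Proof. induction l; rewrite ?sumR_cons, ?sumR_nil; [lra|]. rewrite IHl; lra. Qed.

Lemma sumR_const (l : list nat) (c : R) :
  sumR l (fun _ => c) = INR (length l) * c.
Proof. induction l; rewrite ?sumR_cons, ?sumR_nil, ?length_cons'; [simpl; lra|]. rewrite IHl, S_INR; lra. Qed.

Lemma sumR_bounds (l : list nat) (f : nat -> R) (a b : R) :
  (forall j, In j l -> a <= f j <= b) ->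
  INR (length l) * a <= sumR l f <= INR (length l) * b.
Proof.
  induction l as [|c l IH]; rewrite ?sumR_cons, ?sumR_nil, ?length_cons'; intros H; [simpl; lra|].
  rewrite S_INR.
  assert (H1 := H c (or_introl eq_refl)).
  assert (H2 : forall j, In j l -> a <= f j <= b) by (intros j0 Hj0; apply H; right; exact Hj0).
  specialize (IH H2). lra.
Qed.

Lemma sumR_le (l : list nat) (f g : nat -> R) :
  (forall j, In j l -> f j <= g j) -> sumR l f <= sumR l g.
Proof.
  induction l as [|c l IH]; rewrite ?sumR_cons, ?sumR_nil; intros H; [lra|].
  assert (H1 := H c (or_introl eq_refl)).
  assert (H2 : forall j, In j l -> f j <= g j) by (intros j0 Hj0; apply H; right; exact Hj0).
  specialize (IH H2). lra.
Qed.

Lemma Rabs_le_inv (a b : R) : Rabs a <= b -> -b <= a <= b.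
Proof. unfold Rabs; destruct (Rcase_abs a); intros; lra. Qed.

Lemma sumR_ext (l : list nat) (f g : nat -> R) :
  (forall j, In j l -> f j = g j) -> sumR l f = sumR l g.
Proof.
  induction l as [|c l IH]; rewrite ?sumR_cons, ?sumR_nil; intros H; [lra|].
  rewrite (H c (or_introl eq_refl)), IH; [lra|].
  intros j0 Hj0; apply H; right; exact Hj0.
Qed.

Lemma in_nb n r x i j :
  In j (nbrs n r x i) <-> (j < n)%nat /\ Rabs (x j - x i) <= r i.
Proof.
  unfold nbrs. rewrite filter_In, in_seq.
  destruct (Rle_dec (Rabs (x j - x i)) (r i)); split; intros H; intuition (try lia; try discriminate).
Qed.

Definition oth n r (x : state) i := filter (fun j => negb (Nat.eqb j i)) (nbrs n r x i).
Definition mean n r (x : state) i :=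
  (x i + sumR (oth n r x i) x) / INR (S (length (oth n r x i))).
Definition kf n r (x : state) i :=
  INR (length (oth n r x i)) / INR (S (length (oth n r x i))).

Lemma in_oth n r x i j :
  In j (oth n r x i) <-> ((j < n)%nat /\ j <> i /\ Rabs (x j - x i) <= r i).
Proof.
  unfold oth. rewrite filter_In, in_nb.
  destruct (Nat.eqb_spec j i); simpl; split; intuition (try congruence; try discriminate).
Qed.

Lemma NoDup_nb n r x i : NoDup (nbrs n r x i).
Proof. unfold nbrs. apply NoDup_filter, seq_NoDup. Qed.

Lemma nb_len n r x i : (i < n)%nat -> 0 <= r i ->
  length (nbrs n r x i) = S (length (oth n r x i)) /\
  sumR (nbrs n r x i) x = x i + sumR (oth n r x i) x.
Proof.
  intros Hi Hr. apply sumR_app_elem; [apply NoDup_nb|].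
  apply in_nb. split; auto. replace (x i - x i) with 0 by ring. rewrite Rabs_R0; auto.
Qed.

Lemma kf_bounds n r x i : 0 <= kf n r x i < 1.
Proof.
  unfold kf. set (L := length _). rewrite S_INR.
  assert (0 <= INR L) by apply pos_INR.
  split; [apply Rmult_le_pos; [lra| left; apply Rinv_0_lt_compat; lra]|].
  apply (Rmult_lt_reg_r (INR L + 1)); [lra|].
  unfold Rdiv. rewrite Rmult_assoc, Rinv_l by lra. lra.
Qed.

Lemma kf_half n r x i : (1 <= length (oth n r x i))%nat -> / 2 <= kf n r x i.
Proof.
  intros H. unfold kf. set (L := length _) in *. rewrite S_INR.
  apply le_INR in H. simpl in H.
  apply (Rmult_le_reg_r (INR L + 1)); [lra|].
  unfold Rdiv. rewrite Rmult_assoc, Rinv_l by lra. lra.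
Qed.

Lemma kf_zero n r x i : length (oth n r x i) = 0%nat -> kf n r x i = 0.
Proof. intros H. unfold kf. rewrite H. simpl. lra. Qed.

Lemma step_form n r x u b i w d :
  (i < n)%nat -> 0 <= r i ->
  (forall j, In j (oth n r x i) -> u j i = w) ->
  (forall j, In j (oth n r x i) -> Rabs (b j i) <= d) ->
  exists beta, Rabs beta <= kf n r x i * d /\
    step n r x u b i = proj01 (mean n r x i + kf n r x i * w + beta).
Proof.
  intros Hi Hr Hu Hb.
  destruct (nb_len n r x i Hi Hr) as [Hlen _].
  set (L := oth n r x i) in *.
  exists (sumR L (fun j => b j i) / INR (S (length L))).
  assert (HL : 0 < INR (S (length L))) by (apply lt_0_INR; lia).
  split.
  - unfold kf. fold L.
    assert (Hs := sumR_bounds L (fun j => b j i) (-d) d).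
    assert (H1 : forall j, In j L -> -d <= b j i <= d).
    { intros j Hj. specialize (Hb j Hj). apply Rabs_le_inv in Hb. auto. }
    specialize (Hs H1).
    unfold Rdiv. rewrite Rabs_mult, (Rabs_right (/ _)) by (left; apply Rinv_0_lt_compat; auto).
    replace (INR (length L) * / INR (S (length L)) * d) with (INR (length L) * d * / INR (S (length L))) by ring.
    apply Rmult_le_compat_r; [left; apply Rinv_0_lt_compat; auto|].
    apply Rabs_le; lra.
  - unfold step. cbv zeta. fold (oth n r x i). fold L. rewrite Hlen.
    f_equal. unfold mean, kf. fold L.
    rewrite (sumR_ext L (fun j => x j + u j i + b j i) (fun j => x j + (w + b j i))).
    2:{ intros j Hj. rewrite (Hu j Hj). ring. }
    rewrite sumR_plus, sumR_plus, sumR_const.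
    field. lra.
Qed.

Lemma proj01_mono a b : a <= b -> proj01 a <= proj01 b.
Proof. unfold proj01, Rmin, Rmax. intros. repeat destruct Rle_dec; lra. Qed.
Lemma proj01_in y : 0 <= proj01 y <= 1.
Proof. unfold proj01, Rmin, Rmax. repeat destruct Rle_dec; lra. Qed.
Lemma proj01_id y : 0 <= y <= 1 -> proj01 y = y.
Proof. unfold proj01, Rmin, Rmax. intros. repeat destruct Rle_dec; lra. Qed.
Lemma proj01_le y : 0 <= y -> proj01 y <= y.
Proof. unfold proj01, Rmin, Rmax. intros. repeat destruct Rle_dec; lra. Qed.
Lemma proj01_ge y : y <= 1 -> y <= proj01 y.
Proof. unfold proj01, Rmin, Rmax. intros. repeat destruct Rle_dec; lra. Qed.
Lemma proj01_ge' y : y <= 1 -> proj01 y >= y.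
Proof. unfold proj01, Rmin, Rmax. intros. repeat destruct Rle_dec; lra. Qed.
Lemma proj01_lip a b : Rabs (proj01 a - proj01 b) <= Rabs (a - b).
Proof.
  unfold proj01, Rmin, Rmax.
  repeat destruct Rle_dec; unfold Rabs; repeat destruct Rcase_abs; lra.
Qed.

Lemma NoDup_oth n r x i : NoDup (oth n r x i).
Proof. unfold oth. apply NoDup_filter, NoDup_nb. Qed.

Lemma mean_bounds n r x i a b :
  a <= x i <= b -> (forall j, In j (oth n r x i) -> a <= x j <= b) ->
  a <= mean n r x i <= b.
Proof.
  intros Hi Hj. unfold mean. set (L := oth n r x i) in *.
  assert (Hs := sumR_bounds L x a b Hj).
  rewrite S_INR. assert (0 <= INR (length L)) by apply pos_INR.
  split.
  - apply (Rmult_le_reg_r (INR (length L) + 1)); [lra|].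
    unfold Rdiv; rewrite Rmult_assoc, Rinv_l by lra. lra.
  - apply (Rmult_le_reg_r (INR (length L) + 1)); [lra|].
    unfold Rdiv; rewrite Rmult_assoc, Rinv_l by lra. lra.
Qed.

Lemma mean_isolated n r x i : length (oth n r x i) = 0%nat -> mean n r x i = x i.
Proof.
  intros H. unfold mean. destruct (oth n r x i); [|discriminate].
  rewrite sumR_nil. simpl. field.
Qed.

Lemma mean_contains n r x i F M :
  (F = i \/ In F (oth n r x i)) ->
  (forall j, (j = i \/ In j (oth n r x i)) -> j <> F -> x j <= M) ->
  M <= x F -> (1 <= length (oth n r x i))%nat ->
  mean n r x i <= (x F + M) / 2.
Proof.
  intros HF HM HMF Hl. unfold mean. set (L := oth n r x i) in *.
  assert (Hsum : x i + sumR L x <= x F + INR (length L) * M).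
  { destruct HF as [HF|HF].
    - subst F.
      assert (H2 : sumR L x <= sumR L (fun _ => M)).
      { apply sumR_le. intros j Hj. apply HM; auto.
        intros ->. unfold L in Hj. apply in_oth in Hj. tauto. }
      rewrite sumR_const in H2. lra.
    - destruct (sumR_app_elem x F L (NoDup_oth n r x i) HF) as [E1 E2].
      rewrite E2, E1, S_INR.
      set (L' := filter _ L) in *.
      assert (H2 : sumR L' x <= sumR L' (fun _ => M)).
      { apply sumR_le. intros j Hj. unfold L' in Hj. apply filter_In in Hj.
        destruct Hj as [Hj1 Hj2]. apply HM; auto.
        destruct (Nat.eqb_spec j F); simpl in Hj2; congruence. }
      rewrite sumR_const in H2.
      assert (x i <= M).
      { apply HM; auto. intros ->. unfold L in HF. apply in_oth in HF. tauto. }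
      lra. }
  apply le_INR in Hl. simpl in Hl.
  rewrite S_INR.
  apply (Rmult_le_reg_r (INR (length L) + 1)); [lra|].
  unfold Rdiv; rewrite Rmult_assoc, Rinv_l by lra.
  assert ((INR (length L) - 1) * M <= (INR (length L) - 1) * x F) by (apply Rmult_le_compat_l; lra).
  nra.
Qed.

Lemma exists_min (x : state) (l : list nat) :
  l <> [] -> exists i, In i l /\ forall j, In j l -> x i <= x j.
Proof.
  induction l as [|a l IH]; intros H; [congruence|].
  destruct l as [|c l].
  - exists a. split; [left; auto|]. intros j [Hj|[]]; subst; lra.
  - destruct IH as [i [Hi Hmin]]; [discriminate|].
    destruct (Rle_dec (x a) (x i)).
    + exists a. split; [left; auto|]. intros j [Hj|Hj]; [subst; lra|].
      specialize (Hmin j Hj); lra.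
    + exists i. split; [right; auto|]. intros j [Hj|Hj]; [subst; lra|]. auto.
Qed.

Lemma exists_max (x : state) (l : list nat) :
  l <> [] -> exists i, In i l /\ forall j, In j l -> x j <= x i.
Proof.
  intros H. destruct (exists_min (fun j => - x j) l H) as [i [Hi Hm]].
  exists i. split; auto. intros j Hj. specialize (Hm j Hj). lra.
Qed.

Lemma pig_weak (x : state) (b r : R) : 0 <= r -> forall k (a : R) (l : list nat),
  length l = S k -> NoDup l ->
  (forall i, In i l -> a <= x i <= b) ->
  (forall i j, In i l -> In j l -> i <> j -> r <= Rabs (x i - x j)) ->
  INR k * r <= b - a.
Proof.
  intros Hr k. induction k as [|k IH]; intros a l Hlen Hnd Hab Hfar.
  - destruct l as [|c l]; [discriminate|]. specialize (Hab c (or_introl eq_refl)).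
    simpl. lra.
  - assert (Hne : l <> []) by (intros ->; discriminate).
    destruct (exists_min x l Hne) as [i0 [Hi0 Hmin]].
    destruct (sumR_app_elem x i0 l Hnd Hi0) as [E1 _].
    set (l' := filter _ l) in *.
    assert (Hin' : forall j, In j l' -> In j l /\ j <> i0).
    { intros j Hj. unfold l' in Hj. apply filter_In in Hj. destruct Hj as [Hj1 Hj2].
      destruct (Nat.eqb_spec j i0); simpl in Hj2; try discriminate. auto. }
    assert (IH' := IH (x i0 + r) l').
    assert (Hk : INR k * r <= b - (x i0 + r)).
    { apply IH'.
      - rewrite Hlen in E1. injection E1; auto.
      - unfold l'; apply NoDup_filter; auto.
      - intros i Hi. destruct (Hin' i Hi) as [Hi1 Hi2].
        specialize (Hab i Hi1). specialize (Hmin i Hi1).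
        specialize (Hfar i i0 Hi1 Hi0 Hi2). split; [|lra].
        unfold Rabs in Hfar; destruct Rcase_abs; lra.
      - intros i j Hi Hj Hij. apply Hfar; auto; [apply Hin'|apply Hin']; auto. }
    specialize (Hab i0 Hi0). rewrite S_INR. lra.
Qed.

Lemma pig_strict (n : nat) (x : state) (r : R) : (2 <= n)%nat -> 0 <= r ->
  in_cube n x ->
  (forall i j, (i < n)%nat -> (j < n)%nat -> i <> j -> r < Rabs (x i - x j)) ->
  INR (n - 1) * r < 1.
Proof.
  intros Hn Hr Hc Hfar.
  set (l := seq 0 n).
  assert (Hne : l <> []) by (unfold l; destruct n; [lia|discriminate]).
  destruct (exists_min x l Hne) as [i0 [Hi0 Hmin]].
  assert (Hnd : NoDup l) by apply seq_NoDup.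
  destruct (sumR_app_elem x i0 l Hnd Hi0) as [E1 _].
  set (l' := filter _ l) in *.
  assert (Hin' : forall j, In j l' -> In j l /\ j <> i0).
  { intros j Hj. unfold l' in Hj. apply filter_In in Hj. destruct Hj as [Hj1 Hj2].
    destruct (Nat.eqb_spec j i0); simpl in Hj2; try discriminate. auto. }
  assert (Hl' : length l' = (n - 1)%nat) by (unfold l in E1; rewrite length_seq in E1; lia).
  assert (Hne' : l' <> []) by (intros E; rewrite E in Hl'; simpl in Hl'; lia).
  destruct (exists_min x l' Hne') as [i1 [Hi1 Hmin1]].
  assert (Hinl : forall j, In j l -> (j < n)%nat) by (intros j Hj; unfold l in Hj; apply in_seq in Hj; lia).
  assert (Hgt : forall j, In j l' -> x i0 + r < x j).
  { intros j Hj. destruct (Hin' j Hj) as [Hj1 Hj2].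
    specialize (Hfar j i0 (Hinl j Hj1) (Hinl i0 Hi0) Hj2). specialize (Hmin j Hj1).
    unfold Rabs in Hfar; destruct Rcase_abs; lra. }
  assert (Hw : INR (n - 2) * r <= 1 - x i1).
  { apply (pig_weak x 1 r Hr (n - 2) (x i1) l').
    - lia.
    - unfold l'; apply NoDup_filter; auto.
    - intros i Hi. split; [apply Hmin1; auto|]. apply Hc, Hinl, Hin'; auto.
    - intros i j Hi Hj Hij. left. apply Hfar; auto; apply Hinl, Hin'; auto. }
  specialize (Hgt i1 Hi1). assert (0 <= x i0) by (apply Hc, Hinl; auto).
  replace (n - 1)%nat with (S (n - 2)) by lia. rewrite S_INR. lra.
Qed.

Lemma INR_pred n : (1 <= n)%nat -> INR (n - 1) = INR n - 1.
Proof. intros H. rewrite minus_INR by lia. simpl. ring. Qed.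

Lemma not_all_far (n : nat) (x : state) (r1 : R) : (3 <= n)%nat ->
  1 / (INR n - 1) <= r1 -> in_cube n x ->
  ~ (forall i j, (i < n)%nat -> (j < n)%nat -> i <> j -> r1 < Rabs (x i - x j)).
Proof.
  intros Hn Hr Hc Hfar.
  assert (Hn1 : 2 <= INR n) by (replace 2 with (INR 2) by (simpl; lra); apply le_INR; lia).
  assert (Hr0 : 0 <= r1).
  { apply Rle_trans with (1 / (INR n - 1)); auto. unfold Rdiv. apply Rmult_le_pos; [lra|].
    left; apply Rinv_0_lt_compat; lra. }
  assert (H := pig_strict n x r1 ltac:(lia) Hr0 Hc Hfar).
  rewrite INR_pred in H by lia.
  assert (1 <= (INR n - 1) * r1).
  { apply (Rmult_le_compat_l (INR n - 1)) in Hr; [|lra].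
    replace ((INR n - 1) * (1 / (INR n - 1))) with 1 in Hr by (field; lra). lra. }
  lra.
Qed.

Definition cr (r1 : R) : nat -> R := fun _ => r1.

Definition trans n r1 d (x x' : state) (w : nat -> R) : Prop :=
  forall i, (i < n)%nat -> exists beta, Rabs beta <= kf n (cr r1) x i * d /\
    x' i = proj01 (mean n (cr r1) x i + kf n (cr r1) x i * w i + beta).

Lemma trans_of_step n r1 d x u b w : 0 <= r1 ->
  (forall i j, (i < n)%nat -> (j < n)%nat -> u j i = w i /\ Rabs (b j i) <= d) ->
  trans n r1 d x (step n (cr r1) x u b) w.
Proof.
  intros Hr H i Hi. apply step_form; auto.
  - intros j Hj. apply in_oth in Hj. apply H; tauto.
  - intros j Hj. apply in_oth in Hj. apply H; tauto.
Qed.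

Lemma oth_nil n r1 x i : (forall j, (j < n)%nat -> j <> i -> r1 < Rabs (x j - x i)) ->
  length (oth n (cr r1) x i) = 0%nat.
Proof.
  intros H. destruct (oth n (cr r1) x i) as [|j l] eqn:E; auto.
  exfalso. assert (Hj : In j (oth n (cr r1) x i)) by (rewrite E; left; auto).
  apply in_oth in Hj. unfold cr in Hj. destruct Hj as [H1 [H2 H3]].
  specialize (H j H1 H2). lra.
Qed.

Lemma oth_ne n r1 x i j : (j < n)%nat -> j <> i -> Rabs (x j - x i) <= r1 ->
  (1 <= length (oth n (cr r1) x i))%nat.
Proof.
  intros H1 H2 H3. assert (Hj : In j (oth n (cr r1) x i)) by (apply in_oth; unfold cr; auto).
  destruct (oth n (cr r1) x i); [contradiction| simpl; lia].
Qed.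

Lemma trans_iso n r1 d x x' w i : trans n r1 d x x' w -> in_cube n x -> (i < n)%nat ->
  (forall j, (j < n)%nat -> j <> i -> r1 < Rabs (x j - x i)) -> x' i = x i.
Proof.
  intros Ht Hc Hi Hiso. destruct (Ht i Hi) as [beta [Hb E]].
  assert (H0 := oth_nil n r1 x i Hiso).
  rewrite (kf_zero _ _ _ _ H0) in Hb, E. rewrite (mean_isolated _ _ _ _ H0) in E.
  assert (beta = 0) by (assert (Hb' := Rabs_pos beta); assert (Rabs beta = 0) by lra;
     unfold Rabs in *; destruct Rcase_abs; lra).
  subst beta. rewrite E. replace (x i + 0 * w i + 0) with (x i) by ring. apply proj01_id. apply Hc; auto.
Qed.

Lemma proj01_le_max y : proj01 y <= Rmax 0 y.
Proof. unfold proj01, Rmin, Rmax. repeat destruct Rle_dec; lra. Qed.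

Lemma Rabs_sym a b : Rabs (a - b) = Rabs (b - a).
Proof. apply Rabs_minus_sym. Qed.

Definition Clean n r1 (x : state) (G : nat -> bool) (s : R) : Prop :=
  s <= r1 /\
  (forall i j, (i < n)%nat -> (j < n)%nat -> G i = true -> G j = true -> Rabs (x i - x j) <= s) /\
  (forall i k, (i < n)%nat -> (k < n)%nat -> G i = true -> G k = false -> x i + r1 < x k) /\
  (forall k l, (k < n)%nat -> (l < n)%nat -> G k = false -> G l = false -> k <> l ->
      r1 < Rabs (x k - x l)) /\
  (exists i j, (i < n)%nat /\ (j < n)%nat /\ i <> j /\ G i = true /\ G j = true).

Lemma nbrs_same n r x i i' :
  (forall j, (j < n)%nat -> (Rabs (x j - x i) <= r i <-> Rabs (x j - x i') <= r i')) ->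
  nbrs n r x i = nbrs n r x i'.
Proof.
  intros H. unfold nbrs. apply filter_ext_in. intros j Hj. apply in_seq in Hj.
  specialize (H j ltac:(lia)).
  destruct (Rle_dec (Rabs (x j - x i)) (r i)), (Rle_dec (Rabs (x j - x i')) (r i')); tauto.
Qed.

Lemma mean_nb n r x i : (i < n)%nat -> 0 <= r i ->
  mean n r x i = sumR (nbrs n r x i) x / INR (length (nbrs n r x i)) /\
  kf n r x i = (INR (length (nbrs n r x i)) - 1) / INR (length (nbrs n r x i)).
Proof.
  intros Hi Hr. destruct (nb_len n r x i Hi Hr) as [E1 E2].
  unfold mean, kf. rewrite E1, E2, (S_INR (length (oth n r x i))). split; [auto| f_equal; ring].
Qed.

Lemma clean_nb n r1 x G s i j : Clean n r1 x G s -> (i < n)%nat -> G i = true -> (j < n)%nat ->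
  (Rabs (x j - x i) <= r1 <-> G j = true).
Proof.
  intros [C0 [C1 [C2 [C3 C4]]]] Hi Gi Hj. split.
  - intros H. destruct (G j) eqn:Gj; auto. specialize (C2 i j Hi Hj Gi Gj).
    unfold Rabs in H; destruct Rcase_abs; lra.
  - intros Gj. specialize (C1 i j Hi Hj Gi Gj). rewrite Rabs_minus_sym in C1. lra.
Qed.

Lemma clean_out_iso n r1 x G s k : Clean n r1 x G s -> (k < n)%nat -> G k = false ->
  forall j, (j < n)%nat -> j <> k -> r1 < Rabs (x j - x k).
Proof.
  intros [C0 [C1 [C2 [C3 C4]]]] Hk Gk j Hj Hjk. destruct (G j) eqn:Gj.
  - specialize (C2 j k Hj Hk Gj Gk). unfold Rabs; destruct Rcase_abs; lra.
  - apply C3; auto.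
Qed.

Lemma clean_core n r1 d x x' w G s : 0 <= d -> 0 <= r1 -> in_cube n x ->
  Clean n r1 x G s -> trans n r1 d x x' w ->
  exists mu k0, / 2 <= k0 < 1 /\
  (forall i, (i < n)%nat -> G i = true -> mean n (cr r1) x i = mu /\ kf n (cr r1) x i = k0) /\
  (forall l, (forall i, (i < n)%nat -> G i = true -> l <= x i) -> l <= mu) /\
  (forall h, (forall i, (i < n)%nat -> G i = true -> x i <= h) -> mu <= h) /\
  (forall i, (i < n)%nat -> G i = true -> exists beta, Rabs beta <= k0 * d /\
       x' i = proj01 (mu + k0 * w i + beta)) /\
  (forall k, (k < n)%nat -> G k = false -> x' k = x k).
Proof.
  intros Hd Hr Hc HC Ht.
  assert (HC' := HC). destruct HC' as [C0 [C1 [C2 [C3 [i0 [j0 [Hi0 [Hj0 [Hij [Gi0 Gj0]]]]]]]]]].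
  exists (mean n (cr r1) x i0), (kf n (cr r1) x i0).
  assert (Hsame : forall i, (i < n)%nat -> G i = true ->
            mean n (cr r1) x i = mean n (cr r1) x i0 /\ kf n (cr r1) x i = kf n (cr r1) x i0).
  { intros i Hi Gi.
    assert (E : nbrs n (cr r1) x i = nbrs n (cr r1) x i0).
    { apply nbrs_same. intros j Hj. unfold cr.
      rewrite (clean_nb n r1 x G s i j HC Hi Gi Hj), (clean_nb n r1 x G s i0 j HC Hi0 Gi0 Hj). tauto. }
    destruct (mean_nb n (cr r1) x i Hi Hr) as [M1 K1].
    destruct (mean_nb n (cr r1) x i0 Hi0 Hr) as [M2 K2].
    rewrite M1, K1, M2, K2, E. auto. }
  assert (Hoth : forall j, In j (oth n (cr r1) x i0) -> (j < n)%nat /\ G j = true).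
  { intros j Hj. apply in_oth in Hj. unfold cr in Hj. destruct Hj as [Hj1 [_ Hj3]].
    split; auto. apply (clean_nb n r1 x G s i0 j HC Hi0 Gi0 Hj1); auto. }
  split; [split; [|apply kf_bounds]|].
  { apply kf_half. apply (oth_ne n r1 x i0 j0); auto.
    apply (clean_nb n r1 x G s i0 j0 HC Hi0 Gi0 Hj0); auto. }
  split; [auto|].
  split.
  { intros l Hl. apply (mean_bounds n (cr r1) x i0 l 1).
    - split; [apply Hl; auto| apply Hc; auto].
    - intros j Hj. destruct (Hoth j Hj). split; [apply Hl; auto| apply Hc; auto]. }
  split.
  { intros h Hh. apply (mean_bounds n (cr r1) x i0 0 h).
    - split; [apply Hc; auto| apply Hh; auto].
    - intros j Hj. destruct (Hoth j Hj). split; [apply Hc; auto| apply Hh; auto]. }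
  split.
  { intros i Hi Gi. destruct (Ht i Hi) as [beta [Hb E]]. destruct (Hsame i Hi Gi) as [M K].
    exists beta. rewrite M, K in *. auto. }
  intros k Hk Gk. apply (trans_iso n r1 d x x' w k Ht Hc Hk).
  apply (clean_out_iso n r1 x G s k HC Hk Gk).
Qed.

Definition Contact n r1 d kap (x : state) (G : nat -> bool) (F : nat) : Prop :=
  (forall i j, (i < n)%nat -> (j < n)%nat -> G i = true -> G j = true -> Rabs (x i - x j) <= 2 * d) /\
  (F < n)%nat /\ G F = false /\
  (forall i, (i < n)%nat -> G i = true -> x i + r1 - kap <= x F) /\
  (exists i, (i < n)%nat /\ G i = true /\ x F <= x i + r1) /\
  (forall k, (k < n)%nat -> G k = false -> k <> F -> x F + r1 < x k) /\
  (forall k l, (k < n)%nat -> (l < n)%nat -> G k = false -> G l = false -> k <> l ->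
      r1 < Rabs (x k - x l)) /\
  (exists i j, (i < n)%nat /\ (j < n)%nat /\ i <> j /\ G i = true /\ G j = true).

Lemma clean_to_cc n r1 d v0 x x' w wc G s : 0 <= d -> 0 <= r1 -> in_cube n x ->
  2 * d <= r1 -> v0 + d < r1 ->
  Clean n r1 x G s -> trans n r1 d x x' w ->
  (forall i, (i < n)%nat -> G i = true -> w i = wc) -> Rabs wc <= v0 ->
  Clean n r1 x' G (2 * d) \/ exists F, Contact n r1 d (v0 + d) x' G F.
Proof.
  intros Hd Hr Hc Hd2 Hv HC Ht Hw Hwc.
  destruct (clean_core n r1 d x x' w G s Hd Hr Hc HC Ht)
    as [mu [k0 [Hk0 [Hsame [Hl [Hh [Hnew Hout]]]]]]].
  assert (HC' := HC). destruct HC' as [C0 [C1 [C2 [C3 C4]]]].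
  assert (Hmu0 : 0 <= mu) by (apply Hl; intros; apply Hc; auto).
  assert (Hkw : Rabs (k0 * wc) <= v0).
  { rewrite Rabs_mult, (Rabs_right k0) by lra.
    apply Rle_trans with (1 * v0); [apply Rmult_le_compat; try lra; apply Rabs_pos|lra]. }
  assert (Htight : forall i j, (i < n)%nat -> (j < n)%nat -> G i = true -> G j = true ->
             Rabs (x' i - x' j) <= 2 * d).
  { intros i j Hi Hj Gi Gj. destruct (Hnew i Hi Gi) as [bi [Hbi Ei]].
    destruct (Hnew j Hj Gj) as [bj [Hbj Ej]]. rewrite Ei, Ej, (Hw i Hi Gi), (Hw j Hj Gj).
    eapply Rle_trans; [apply proj01_lip|].
    apply Rabs_le_inv in Hbi. apply Rabs_le_inv in Hbj. apply Rabs_le. nra. }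
  assert (Hup : forall i, (i < n)%nat -> G i = true -> x' i <= mu + v0 + d).
  { intros i Hi Gi. destruct (Hnew i Hi Gi) as [bi [Hbi Ei]]. rewrite Ei, (Hw i Hi Gi).
    eapply Rle_trans; [apply proj01_le_max|]. apply Rabs_le_inv in Hbi. apply Rabs_le_inv in Hkw.
    apply Rmax_lub; nra. }
  assert (Hkap : forall i k, (i < n)%nat -> (k < n)%nat -> G i = true -> G k = false ->
             x' i + r1 - (v0 + d) <= x' k).
  { intros i k Hi Hk Gi Gk. rewrite (Hout k Hk Gk).
    assert (mu <= x k - r1) by (apply Hh; intros j Hj Gj; specialize (C2 j k Hj Hk Gj Gk); lra).
    specialize (Hup i Hi Gi). lra. }
  assert (Hpair : forall k l, (k < n)%nat -> (l < n)%nat -> G k = false -> G l = false -> k <> l ->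
      r1 < Rabs (x' k - x' l)).
  { intros k l Hk Hl' Gk Gl Hkl. rewrite (Hout k Hk Gk), (Hout l Hl' Gl). apply C3; auto. }
  destruct (Classical_Prop.classic (exists F i, (F < n)%nat /\ G F = false /\ (i < n)%nat /\
              G i = true /\ x' F <= x' i + r1)) as [[F [i [HF [GF [Hi [Gi Hc1]]]]]]|Hno].
  - right. exists F. unfold Contact.
    split; [auto|]. split; [auto|]. split; [auto|].
    split; [intros j Hj Gj; apply Hkap; auto|].
    split; [exists i; auto|].
    split; [|split; auto].
    intros k Hk Gk HkF. specialize (Hpair k F Hk HF Gk GF HkF).
    specialize (Hkap i k Hi Hk Gi Gk).
    unfold Rabs in Hpair; destruct Rcase_abs in Hpair; lra.
  - left. split; [lra|]. split; [auto|]. split; [|split; auto].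
    intros i k Hi Hk Gi Gk. apply Rnot_le_lt. intros H. apply Hno. exists k, i. auto.
Qed.

Lemma new_val_bounds n r1 d v0 x x' w i lo hi : 0 <= d ->
  trans n r1 d x x' w -> (i < n)%nat -> Rabs (w i) <= v0 ->
  lo <= mean n (cr r1) x i <= hi ->
  proj01 (lo - v0 - d) <= x' i <= proj01 (hi + v0 + d).
Proof.
  intros Hd Ht Hi Hw Hm. destruct (Ht i Hi) as [beta [Hb E]]. rewrite E.
  assert (Hk := kf_bounds n (cr r1) x i).
  assert (Hkw : Rabs (kf n (cr r1) x i * w i) <= v0).
  { rewrite Rabs_mult, (Rabs_right (kf _ _ _ _)) by lra.
    apply Rle_trans with (1 * v0); [apply Rmult_le_compat; try lra; apply Rabs_pos|lra]. }
  apply Rabs_le_inv in Hkw.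
  assert (Hb' : Rabs beta <= d) by (apply Rle_trans with (kf n (cr r1) x i * d); [auto|nra]).
  apply Rabs_le_inv in Hb'.
  split; apply proj01_mono; lra.
Qed.

Lemma contact_step n r1 d v0 x x' w G F : 0 <= d -> 0 <= v0 -> in_cube n x ->
  7 * d + 3 * v0 <= r1 / 2 ->
  Contact n r1 d (v0 + d) x G F -> trans n r1 d x x' w ->
  (forall i, (i < n)%nat -> Rabs (w i) <= v0) ->
  Clean n r1 x' (fun j => G j || Nat.eqb j F) (r1 / 2 + 7 * d + 3 * v0) /\
  (forall l, (forall i, (i < n)%nat -> G i = true -> l <= x i) ->
     forall a, (a < n)%nat -> G a || Nat.eqb a F = true -> l - 3 * d - v0 <= x' a).
Proof.
  intros Hd Hv Hc Hpar HK Ht Hw.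
  destruct HK as [T1 [HF [GF [T3 [[i1 [Hi1 [Gi1 Hcon]]] [T5 [T6 [i0 [j0 [Hi0 [Hj0 [Hij [Gi0 Gj0]]]]]]]]]]]]].
  set (c := x i0). set (M := x F - r1 + (v0 + d)).
  assert (Hr : 0 <= r1) by lra.
  assert (Hmem : forall i, (i < n)%nat -> G i = true -> c - 2 * d <= x i <= M).
  { intros i Hi Gi. specialize (T1 i0 i Hi0 Hi Gi0 Gi). apply Rabs_le_inv in T1.
    specialize (T3 i Hi Gi). unfold c, M. lra. }
  assert (HFc : c <= x F) by (specialize (T3 i0 Hi0 Gi0); unfold c; lra).
  assert (HFup : x F <= c + 2 * d + r1) by (specialize (Hmem i1 Hi1 Gi1); specialize (T1 i0 i1 Hi0 Hi1 Gi0 Gi1); apply Rabs_le_inv in T1; unfold c; lra).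
  assert (Hiso : forall k, (k < n)%nat -> G k = false -> k <> F ->
            forall j, (j < n)%nat -> j <> k -> r1 < Rabs (x j - x k)).
  { intros k Hk Gk HkF j Hj Hjk. specialize (T5 k Hk Gk HkF).
    destruct (G j) eqn:Gj.
    - specialize (Hmem j Hj Gj). unfold M in Hmem. unfold Rabs; destruct Rcase_abs; lra.
    - destruct (Nat.eq_dec j F) as [->|HjF].
      + unfold Rabs; destruct Rcase_abs; lra.
      + apply T6; auto. }
  assert (HG' : forall a j, (a < n)%nat -> G a || Nat.eqb a F = true -> In j (oth n (cr r1) x a) ->
             (j < n)%nat /\ G j || Nat.eqb j F = true).
  { intros a j Ha Ga Hj. apply in_oth in Hj. unfold cr in Hj. destruct Hj as [Hj1 [Hj2 Hj3]].
    split; auto. destruct (G j) eqn:Gj; auto. simpl.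
    destruct (Nat.eqb_spec j F); auto. exfalso.
    specialize (Hiso j Hj1 Gj n0 a Ha (not_eq_sym Hj2)). rewrite Rabs_minus_sym in Hiso. lra. }
  assert (Hlow : forall j, (j < n)%nat -> G j || Nat.eqb j F = true -> c - 2 * d <= x j <= 1).
  { intros j Hj Gj. split; [|apply Hc; auto].
    destruct (G j) eqn:Gj'; [apply Hmem; auto|]. simpl in Gj.
    apply Nat.eqb_eq in Gj. subst j. lra. }
  set (hi := c + 2 * d + (r1 + (v0 + d)) / 2).
  assert (Hmean : forall a, (a < n)%nat -> G a || Nat.eqb a F = true ->
             c - 2 * d <= mean n (cr r1) x a <= hi).
  { intros a Ha Ga. split.
    - apply (mean_bounds n (cr r1) x a (c - 2 * d) 1); [apply Hlow; auto|].
      intros j Hj. destruct (HG' a j Ha Ga Hj). apply Hlow; auto.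
    - destruct (Classical_Prop.classic (F = a \/ In F (oth n (cr r1) x a))) as [HFa|HFa].
      + assert (Hlen : (1 <= length (oth n (cr r1) x a))%nat).
        { destruct HFa as [<-|HFa].
          - apply (oth_ne n r1 x F i1); auto.
            + intros ->. congruence.
            + specialize (T3 i1 Hi1 Gi1). unfold Rabs; destruct Rcase_abs; lra.
          - destruct (oth n (cr r1) x a); [contradiction| simpl; lia]. }
        eapply Rle_trans; [apply (mean_contains n (cr r1) x a F M); auto|].
        * intros j Hj HjF. assert (Hjn : (j < n)%nat /\ G j = true).
          { destruct Hj as [->|Hj].
            - split; auto. destruct (G a) eqn:Gj; auto. simpl in Ga. apply Nat.eqb_eq in Ga. congruence.
            - destruct (HG' a j Ha Ga Hj) as [Hjn Gj]. split; auto.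
              destruct (G j) eqn:Gj'; auto. simpl in Gj. apply Nat.eqb_eq in Gj. congruence. }
          destruct Hjn. apply Hmem; auto.
        * unfold M. lra.
        * unfold M, hi. lra.
      + apply (mean_bounds n (cr r1) x a 0 hi).
        * split; [apply Hc; auto|]. destruct (G a) eqn:Ga'.
          -- specialize (Hmem a Ha Ga'). unfold M in Hmem. unfold hi. lra.
          -- simpl in Ga. apply Nat.eqb_eq in Ga. subst a. tauto.
        * intros j Hj. split; [apply Hc; apply in_oth in Hj; tauto|].
          destruct (HG' a j Ha Ga Hj) as [Hjn Gj]. destruct (G j) eqn:Gj'.
          -- specialize (Hmem j Hjn Gj'). unfold M in Hmem. unfold hi. lra.
          -- simpl in Gj. apply Nat.eqb_eq in Gj. subst j. tauto. }
  assert (Hnew : forall a, (a < n)%nat -> G a || Nat.eqb a F = true ->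
             c - 3 * d - v0 <= x' a <= hi + v0 + d).
  { intros a Ha Ga. destruct (new_val_bounds n r1 d v0 x x' w a (c - 2 * d) hi Hd Ht Ha (Hw a Ha) (Hmean a Ha Ga)) as [L1 L2].
    split.
    - eapply Rle_trans; [|apply L1]. replace (c - 3 * d - v0) with (c - 2 * d - v0 - d) by ring. apply proj01_ge.
      assert (x i0 <= 1) by (apply Hc; auto). unfold c. lra.
    - eapply Rle_trans; [apply L2|]. apply proj01_le.
      assert (0 <= x i0) by (apply Hc; auto). unfold hi, c. lra. }
  split.
  - split; [lra|]. split.
    { intros i j Hi Hj Gi Gj. assert (Ni := Hnew i Hi Gi). assert (Nj := Hnew j Hj Gj).
      apply Rabs_le. unfold hi in *. lra. }
    split.
    { intros i k Hi Hk Gi Gk. apply orb_false_iff in Gk. destruct Gk as [Gk Gk2].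
      apply Nat.eqb_neq in Gk2.
      assert (x' k = x k).
      { apply (trans_iso n r1 d x x' w k Ht Hc Hk). intros j Hj Hjk.
        apply Hiso; auto. }
      specialize (T5 k Hk Gk Gk2). specialize (Hnew i Hi Gi). unfold hi in *.
      specialize (T3 i0 Hi0 Gi0). fold c in T3. lra. }
    split.
    { intros k l Hk Hl Gk Gl Hkl. apply orb_false_iff in Gk. destruct Gk as [Gk Gk2].
      apply orb_false_iff in Gl. destruct Gl as [Gl Gl2].
      apply Nat.eqb_neq in Gk2. apply Nat.eqb_neq in Gl2.
      rewrite (trans_iso n r1 d x x' w k Ht Hc Hk), (trans_iso n r1 d x x' w l Ht Hc Hl).
      - apply T6; auto.
      - intros j Hj Hjl. apply Hiso; auto.
      - intros j Hj Hjk. apply Hiso; auto. }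
    exists i0, j0. rewrite Gi0, Gj0. auto.
  - intros l Hl a Ha Ga. specialize (Hnew a Ha Ga). specialize (Hl i0 Hi0 Gi0). fold c in Hl. lra.
Qed.

Definition clamp (v0 y : R) : R := Rmax (- v0) (Rmin v0 y).

Lemma clamp_abs v0 y : 0 <= v0 -> Rabs (clamp v0 y) <= v0.
Proof. intros. unfold clamp, Rmax, Rmin. apply Rabs_le. repeat destruct Rle_dec; lra. Qed.

Definition Inv1 n r1 (x : state) (th : R) (Fr : nat -> bool) : Prop :=
  (forall j, (j < n)%nat -> Fr j = false -> x j <= th) /\
  (forall k, (k < n)%nat -> Fr k = true -> th + r1 < x k) /\
  (forall k l, (k < n)%nat -> (l < n)%nat -> Fr k = true -> Fr l = true -> k <> l ->
      r1 < Rabs (x k - x l)).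

Definition cnt n (Fr : nat -> bool) : nat := length (filter (fun j => negb (Fr j)) (seq 0 n)).

Lemma filter_upd (Fr : nat -> bool) i l :
  filter (fun j => negb (Fr j || Nat.eqb j i)) l =
  filter (fun j => negb (Nat.eqb j i)) (filter (fun j => negb (Fr j)) l).
Proof.
  induction l as [|a l IH]; simpl; auto.
  destruct (Fr a); simpl; auto.
  destruct (Nat.eqb a i); simpl; rewrite IH; auto.
Qed.

Lemma cnt_dec n Fr i : (i < n)%nat -> Fr i = false ->
  cnt n Fr = S (cnt n (fun j => Fr j || Nat.eqb j i)).
Proof.
  intros Hi Fi. unfold cnt. rewrite filter_upd.
  apply (sumR_app_elem (fun _ => 0) i).
  - apply NoDup_filter, seq_NoDup.
  - apply filter_In. rewrite in_seq, Fi. split; [lia|auto].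
Qed.

Lemma cnt_le n Fr : (cnt n Fr <= n)%nat.
Proof. unfold cnt. rewrite <- (length_seq n 0) at 2. apply filter_length_le. Qed.

Lemma in_nf n (Fr : nat -> bool) j :
  In j (filter (fun j => negb (Fr j)) (seq 0 n)) <-> (j < n)%nat /\ Fr j = false.
Proof.
  rewrite filter_In, in_seq. destruct (Fr j); simpl; split; intuition (try lia; try discriminate).
Qed.

Lemma inv1_to_clean n r1 x th Fr : (3 <= n)%nat -> 1 / (INR n - 1) <= r1 -> in_cube n x ->
  Inv1 n r1 x th Fr -> th <= r1 -> Clean n r1 x (fun j => negb (Fr j)) r1.
Proof.
  intros Hn Hr Hc [I1 [I2 I3]] Hth.
  split; [lra|]. split.
  { intros i j Hi Hj Gi Gj. apply negb_true_iff in Gi. apply negb_true_iff in Gj.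
    assert (A := I1 i Hi Gi). assert (B := I1 j Hj Gj).
    assert (0 <= x i) by (apply Hc; auto). assert (0 <= x j) by (apply Hc; auto).
    apply Rabs_le. lra. }
  split.
  { intros i k Hi Hk Gi Gk. apply negb_true_iff in Gi. apply negb_false_iff in Gk.
    specialize (I1 i Hi Gi). specialize (I2 k Hk Gk). lra. }
  split.
  { intros k l Hk Hl Gk Gl Hkl. apply negb_false_iff in Gk. apply negb_false_iff in Gl. auto. }
  apply NNPP. intros Hno. apply (not_all_far n x r1 Hn Hr Hc).
  intros i j Hi Hj Hij.
  destruct (Fr i) eqn:Fi, (Fr j) eqn:Fj.
  - auto.
  - specialize (I2 i Hi Fi). specialize (I1 j Hj Fj). unfold Rabs; destruct Rcase_abs; lra.
  - specialize (I2 j Hj Fj). specialize (I1 i Hi Fi). unfold Rabs; destruct Rcase_abs; lra.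
  - exfalso. apply Hno. exists i, j. rewrite Fi, Fj. auto.
Qed.

Lemma top_gen n r1 x Fr : (3 <= n)%nat -> 1 / (INR n - 1) <= r1 -> in_cube n x ->
  (forall j k, (j < n)%nat -> (k < n)%nat -> Fr j = false -> Fr k = true -> x j + r1 < x k) ->
  (forall k l, (k < n)%nat -> (l < n)%nat -> Fr k = true -> Fr l = true -> k <> l ->
      r1 < Rabs (x k - x l)) ->
  exists i, (i < n)%nat /\ Fr i = false /\ Inv1 n r1 x (x i) Fr.
Proof.
  intros Hn Hr Hc A1 A3.
  set (NF := filter (fun j => negb (Fr j)) (seq 0 n)).
  assert (Hne : NF <> []).
  { intros E. apply (not_all_far n x r1 Hn Hr Hc). intros i j Hi Hj Hij.
    apply A3; auto.
    - destruct (Fr i) eqn:Fi; auto. assert (H : In i NF) by (apply in_nf; auto). rewrite E in H; contradiction.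
    - destruct (Fr j) eqn:Fj; auto. assert (H : In j NF) by (apply in_nf; auto). rewrite E in H; contradiction. }
  destruct (exists_max x NF Hne) as [i [Hi Hmax]].
  apply in_nf in Hi. destruct Hi as [Hi Fi].
  exists i. split; auto. split; auto. split; [|split; auto].
  all: try (intros j Hj Fj; apply Hmax; apply in_nf; auto).
  all: try (intros k Hk Fk; apply A1; auto).
Qed.

Lemma normalize n r1 x : (3 <= n)%nat -> 1 / (INR n - 1) <= r1 -> in_cube n x ->
  forall f th Fr, (cnt n Fr <= f)%nat -> Inv1 n r1 x th Fr ->
  exists th' Fr', Inv1 n r1 x th' Fr' /\ th' <= th /\
    (th' <= r1 \/ exists i, (i < n)%nat /\ Fr' i = false /\ x i = th' /\
        exists j, (j < n)%nat /\ j <> i /\ Rabs (x j - x i) <= r1).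
Proof.
  intros Hn Hr Hc f. induction f as [|f IH]; intros th Fr Hcnt HI;
    assert (HI' := HI); destruct HI' as [I1 [I2 I3]];
    (destruct (top_gen n r1 x Fr Hn Hr Hc) as [i [Hi [Fi HI1]]];
     [intros j k Hj Hk Fj Fk; assert (A := I1 j Hj Fj); assert (B := I2 k Hk Fk); lra|auto|]).
  - exfalso. rewrite (cnt_dec n Fr i Hi Fi) in Hcnt. lia.
  - assert (Hth : x i <= th) by (apply I1; auto).
    destruct (Rle_dec (x i) r1) as [Hle|Hgt].
    { exists (x i), Fr. auto. }
    destruct (Classical_Prop.classic (exists j, (j < n)%nat /\ j <> i /\ Rabs (x j - x i) <= r1))
      as [Hnb|Hiso].
    { exists (x i), Fr. split; auto. split; auto. right. exists i. auto. }
    assert (Hiso' : forall j, (j < n)%nat -> j <> i -> r1 < Rabs (x j - x i)).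
    { intros j Hj Hji. apply Rnot_le_lt. intros H. apply Hiso. exists j. auto. }
    set (Fr2 := fun j => Fr j || Nat.eqb j i).
    destruct HI1 as [J1 [J2 J3]].
    destruct (top_gen n r1 x Fr2 Hn Hr Hc) as [i2 [Hi2 [Fi2 HI2]]].
    { intros j k Hj Hk Fj Fk. unfold Fr2 in Fj, Fk. apply orb_false_iff in Fj. destruct Fj as [Fj Fj2].
      apply Nat.eqb_neq in Fj2. apply orb_true_iff in Fk. destruct Fk as [Fk|Fk].
      - assert (A := J1 j Hj Fj). assert (B := J2 k Hk Fk). lra.
      - apply Nat.eqb_eq in Fk. subst k. assert (A := J1 j Hj Fj). assert (B := Hiso' j Hj Fj2).
        unfold Rabs in B; destruct Rcase_abs in B; lra. }
    { intros k l Hk Hl Fk Fl Hkl. unfold Fr2 in Fk, Fl.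
      apply orb_true_iff in Fk. apply orb_true_iff in Fl.
      destruct Fk as [Fk|Fk], Fl as [Fl|Fl].
      - apply J3; auto.
      - apply Nat.eqb_eq in Fl. subst l. apply Hiso'; auto.
      - apply Nat.eqb_eq in Fk. subst k. rewrite Rabs_minus_sym. apply Hiso'; auto.
      - apply Nat.eqb_eq in Fk. apply Nat.eqb_eq in Fl. congruence. }
    assert (Hx2 : x i2 <= x i).
    { unfold Fr2 in Fi2. apply orb_false_iff in Fi2. apply J1; tauto. }
    destruct (IH (x i2) Fr2) as [th' [Fr' [H1 [H2 H3]]]]; auto.
    + rewrite (cnt_dec n Fr i Hi Fi) in Hcnt. fold Fr2 in Hcnt. lia.
    + exists th', Fr'. split; auto. split; auto. lra.
Qed.

Lemma phase1_step n r1 d v0 x x' w th Fr i0 : 0 <= d -> 0 <= v0 -> d <= v0 / 4 ->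
  d + v0 / 4 <= r1 / 2 -> in_cube n x ->
  Inv1 n r1 x th Fr -> r1 < th -> (i0 < n)%nat -> Fr i0 = false -> x i0 = th ->
  (exists j, (j < n)%nat /\ j <> i0 /\ Rabs (x j - x i0) <= r1) ->
  trans n r1 d x x' w -> (forall i, (i < n)%nat -> w i = clamp v0 (0 - mean n (cr r1) x i)) ->
  Inv1 n r1 x' (th - v0 / 4) Fr.
Proof.
  intros Hd Hv Hdv Hpar Hc [I1 [I2 I3]] Hth Hi0 Fi0 Ei0 [j0 [Hj0 [Hj0i Hj0d]]] Ht Hw.
  assert (Hfiso : forall k, (k < n)%nat -> Fr k = true ->
            forall j, (j < n)%nat -> j <> k -> r1 < Rabs (x j - x k)).
  { intros k Hk Fk j Hj Hjk. destruct (Fr j) eqn:Fj.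
    - apply I3; auto.
    - assert (A := I1 j Hj Fj). assert (B := I2 k Hk Fk). unfold Rabs; destruct Rcase_abs; lra. }
  split; [|split].
  - intros j Hj Fj.
    destruct (Classical_Prop.classic (exists l, (l < n)%nat /\ l <> j /\ Rabs (x l - x j) <= r1))
      as [[l [Hl [Hlj Hld]]]|Hiso].
    + destruct (Ht j Hj) as [beta [Hb E]]. rewrite E.
      assert (Hk := kf_half n (cr r1) x j (oth_ne n r1 x j l Hl Hlj Hld)).
      assert (Hk1 := kf_bounds n (cr r1) x j).
      set (k := kf n (cr r1) x j) in *.
      assert (Hm : 0 <= mean n (cr r1) x j <= th).
      { apply mean_bounds.
        - split; [apply Hc; auto| apply I1; auto].
        - intros m Hm. apply in_oth in Hm. unfold cr in Hm. destruct Hm as [Hm1 [Hm2 Hm3]].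
          split; [apply Hc; auto|]. destruct (Fr m) eqn:Fm; [|apply I1; auto].
          exfalso. assert (B := Hfiso m Hm1 Fm j Hj (not_eq_sym Hm2)).
          rewrite Rabs_minus_sym in B. lra. }
      set (mu := mean n (cr r1) x j) in *.
      rewrite (Hw j Hj). fold mu.
      assert (Hb' : Rabs beta <= d) by (apply Rle_trans with (k * d); [auto|nra]).
      apply Rabs_le_inv in Hb'.
      eapply Rle_trans; [apply proj01_le_max|]. apply Rmax_lub; [lra|].
      unfold clamp, Rmax, Rmin. repeat destruct Rle_dec; nra.
    + assert (Hiso' : forall l, (l < n)%nat -> l <> j -> r1 < Rabs (x l - x j)).
      { intros l Hl Hlj. apply Rnot_le_lt. intros H. apply Hiso. exists l. auto. }
      rewrite (trans_iso n r1 d x x' w j Ht Hc Hj Hiso').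
      assert (Hji : j <> i0) by (intros ->; apply Hiso; exists j0; auto).
      assert (B := Hiso' i0 Hi0 (not_eq_sym Hji)). assert (A := I1 j Hj Fj).
      unfold Rabs in B; destruct Rcase_abs in B; lra.
  - intros k Hk Fk. rewrite (trans_iso n r1 d x x' w k Ht Hc Hk (Hfiso k Hk Fk)).
    assert (B := I2 k Hk Fk). lra.
  - intros k l Hk Hl Fk Fl Hkl.
    rewrite (trans_iso n r1 d x x' w k Ht Hc Hk (Hfiso k Hk Fk)),
            (trans_iso n r1 d x x' w l Ht Hc Hl (Hfiso l Hl Fl)). auto.
Qed.

Lemma clean_prog n r1 d v0 x x' w G s : 0 <= d -> 0 <= v0 -> d <= v0 / 4 -> v0 + d <= r1 ->
  in_cube n x -> Clean n r1 x G s -> trans n r1 d x x' w ->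
  (forall i, (i < n)%nat -> w i = clamp v0 (1 - mean n (cr r1) x i)) ->
  (exists k, (k < n)%nat /\ G k = false) ->
  forall l, (forall i, (i < n)%nat -> G i = true -> l <= x i) ->
  forall i, (i < n)%nat -> G i = true -> l + v0 / 4 <= x' i.
Proof.
  intros Hd Hv Hdv Hvr Hc HC Ht Hw [k [Hk Gk]] l Hl.
  assert (Hr : 0 <= r1) by lra.
  destruct (clean_core n r1 d x x' w G s Hd Hr Hc HC Ht)
    as [mu [k0 [Hk0 [Hsame [Hlo [Hhi [Hnew Hout]]]]]]].
  assert (HC' := HC). destruct HC' as [C0 [C1 [C2 [C3 C4]]]].
  assert (Hmul : l <= mu) by (apply Hlo; auto).
  assert (Hmuh : mu <= 1 - r1).
  { apply Hhi. intros j Hj Gj. assert (A := C2 j k Hj Hk Gj Gk).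
    assert (x k <= 1) by (apply Hc; auto). lra. }
  intros i Hi Gi. destruct (Hnew i Hi Gi) as [beta [Hb E]]. rewrite E.
  rewrite (Hw i Hi). destruct (Hsame i Hi Gi) as [M _]. rewrite M.
  assert (Hcl : clamp v0 (1 - mu) = v0).
  { unfold clamp, Rmax, Rmin. repeat destruct Rle_dec; lra. }
  rewrite Hcl.
  assert (Hb' : Rabs beta <= d) by (apply Rle_trans with (k0 * d); [auto|nra]).
  apply Rabs_le_inv in Hb'.
  eapply Rle_trans; [|apply proj01_ge]; nra.
Qed.

Lemma filter_true_id (f : nat -> bool) (l : list nat) :
  (forall a, In a l -> f a = true) -> filter f l = l.
Proof.
  induction l as [|a l IH]; simpl; intros H; auto.
  rewrite (H a (or_introl eq_refl)). f_equal. apply IH. intros; apply H; auto.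
Qed.

Lemma kf_full n r1 x i : (i < n)%nat -> 0 <= r1 ->
  (forall j, (j < n)%nat -> Rabs (x j - x i) <= r1) ->
  kf n (cr r1) x i = (INR n - 1) / INR n.
Proof.
  intros Hi Hr H. destruct (mean_nb n (cr r1) x i Hi Hr) as [_ K]. rewrite K.
  assert (E : nbrs n (cr r1) x i = seq 0 n).
  { unfold nbrs. apply filter_true_id. intros a Ha. apply in_seq in Ha.
    unfold cr. destruct Rle_dec; auto. exfalso. apply n0. apply H. lia. }
  rewrite E, length_seq. auto.
Qed.

Lemma fold_max_ge (l : list R) a : In a l -> a <= fold_right Rmax 0 l.
Proof.
  induction l as [|b l IH]; simpl; intros H; [contradiction|].
  destruct H as [<-|H]; [apply Rmax_l|]. eapply Rle_trans; [apply IH; auto|apply Rmax_r].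
Qed.

Lemma fold_max_le (l : list R) B : 0 <= B -> (forall a, In a l -> a <= B) -> fold_right Rmax 0 l <= B.
Proof.
  induction l as [|b l IH]; simpl; intros H0 H; auto.
  apply Rmax_lub; [apply H; auto| apply IH; auto].
Qed.

Lemma spread_ge n x i j : (i < n)%nat -> (j < n)%nat -> Rabs (x i - x j) <= spread n x.
Proof.
  intros Hi Hj. unfold spread. apply fold_max_ge. apply in_flat_map. exists i.
  split; [apply in_seq; lia|]. apply in_map_iff. exists j. split; auto. apply in_seq; lia.
Qed.

Lemma spread_le n x B : 0 <= B -> (forall i j, (i < n)%nat -> (j < n)%nat -> Rabs (x i - x j) <= B) ->
  spread n x <= B.
Proof.
  intros H0 H. unfold spread. apply fold_max_le; auto. intros a Ha.
  apply in_flat_map in Ha. destruct Ha as [i [Hi Ha]]. apply in_map_iff in Ha.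
  destruct Ha as [j [<- Hj]]. apply in_seq in Hi. apply in_seq in Hj. apply H; lia.
Qed.

Lemma phase3_step n r1 d v0 x x' w s D : 0 <= d -> 0 <= v0 -> 2 * d <= r1 -> v0 + d < r1 ->
  in_cube n x -> Clean n r1 x (fun _ => true) s -> trans n r1 d x x' w ->
  (forall i, (i < n)%nat -> w i = clamp v0 (/ 2 - mean n (cr r1) x i)) ->
  0 <= D -> (forall i, (i < n)%nat -> Rabs (x i - / 2) <= D) ->
  Clean n r1 x' (fun _ => true) (2 * d) /\
  forall i, (i < n)%nat -> Rabs (x' i - / 2) <= Rmax (D / 2) (D - v0 / 2) + d.
Proof.
  intros Hd Hv Hdr Hvr Hc HC Ht Hw HD HxD.
  assert (Hr : 0 <= r1) by lra.
  destruct (clean_core n r1 d x x' w _ s Hd Hr Hc HC Ht)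
    as [mu [k0 [Hk0 [Hsame [Hlo [Hhi [Hnew Hout]]]]]]].
  assert (Hmu : / 2 - D <= mu <= / 2 + D).
  { split; [apply Hlo|apply Hhi]; intros i Hi _; specialize (HxD i Hi); apply Rabs_le_inv in HxD; lra. }
  split.
  - destruct (clean_to_cc n r1 d v0 x x' w (clamp v0 (/ 2 - mu)) _ s Hd Hr Hc Hdr Hvr HC Ht)
      as [H|[F HF]]; auto.
    + intros i Hi _. rewrite (Hw i Hi). destruct (Hsame i Hi eq_refl) as [M _]. rewrite M. auto.
    + apply clamp_abs; auto.
    + exfalso. destruct HF as [_ [_ [GF _]]]. discriminate.
  - intros i Hi. destruct (Hnew i Hi eq_refl) as [beta [Hb E]]. rewrite E, (Hw i Hi).
    destruct (Hsame i Hi eq_refl) as [M _]. rewrite M.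
    assert (Hb' : Rabs beta <= d) by (apply Rle_trans with (k0 * d); [auto|nra]).
    apply Rabs_le_inv in Hb'.
    replace (/ 2) with (proj01 (/ 2)) at 2 by (apply proj01_id; lra).
    eapply Rle_trans; [apply proj01_lip|].
    apply Rabs_le. unfold clamp, Rmax, Rmin. repeat destruct Rle_dec; nra.
Qed.

Lemma final_step n r1 eta d eps x x' w s : (3 <= n)%nat -> 0 < d -> 2 * d <= eta -> 4 * d <= eps ->
  8 * d <= 1 - r1 -> 0 <= r1 -> eta <= INR n * r1 / (2 * (INR n - 1)) ->
  in_cube n x -> Clean n r1 x (fun _ => true) s ->
  (forall i, (i < n)%nat -> Rabs (x i - / 2) <= 4 * d) -> trans n r1 d x x' w ->
  (forall i, (i < n)%nat -> w i = if Nat.eqb i 0 then eta - d else if Nat.eqb i 1 then - (eta - d) else 0) ->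
  E' n eta eps x'.
Proof.
  intros Hn Hd Hde Hdeps Hdr Hr Heta Hc HC HxD Ht Hw.
  destruct (clean_core n r1 d x x' w _ s ltac:(lra) Hr Hc HC Ht)
    as [mu [k0 [Hk0 [Hsame [Hlo [Hhi [Hnew Hout]]]]]]].
  assert (HC' := HC). destruct HC' as [C0 [C1 _]].
  assert (HN : 3 <= INR n) by (replace 3 with (INR 3) by (simpl; lra); apply le_INR; lia).
  assert (Hk : k0 = (INR n - 1) / INR n).
  { destruct (Hsame 0%nat ltac:(lia) eq_refl) as [_ K]. rewrite <- K.
    apply kf_full; [lia|auto|]. intros j Hj. specialize (C1 j 0%nat Hj ltac:(lia) eq_refl eq_refl). lra. }
  assert (Hke : k0 * eta <= r1 / 2).
  { rewrite Hk. apply (Rmult_le_compat_r ((INR n - 1) / INR n)) in Heta.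
    2:{ unfold Rdiv. apply Rmult_le_pos; [lra| left; apply Rinv_0_lt_compat; lra]. }
    replace (INR n * r1 / (2 * (INR n - 1)) * ((INR n - 1) / INR n)) with (r1 / 2) in Heta by (field; lra).
    lra. }
  assert (Hmu : / 2 - 4 * d <= mu <= / 2 + 4 * d).
  { split; [apply Hlo|apply Hhi]; intros i Hi _; specialize (HxD i Hi); apply Rabs_le_inv in HxD; lra. }
  assert (Hval : forall i, (i < n)%nat -> exists beta, Rabs beta <= k0 * d /\
             x' i = mu + k0 * w i + beta /\ Rabs (k0 * w i + beta) <= k0 * eta).
  { intros i Hi. destruct (Hnew i Hi eq_refl) as [beta [Hb E]]. exists beta.
    apply Rabs_le_inv in Hb.
    assert (Hwb : Rabs (k0 * w i + beta) <= k0 * eta).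
    { rewrite (Hw i Hi). apply Rabs_le.
      destruct (Nat.eqb i 0); [|destruct (Nat.eqb i 1)]; nra. }
    split; [apply Rabs_le; lra|]. split; auto.
    rewrite E. apply proj01_id. apply Rabs_le_inv in Hwb. lra. }
  assert (Hc2 : c_eta n eta = 2 * (k0 * eta)) by (rewrite Hk; unfold c_eta; field; lra).
  split.
  { intros i Hi. destruct (Hval i Hi) as [beta [_ [E Hb]]]. rewrite E.
    apply Rabs_le_inv in Hb. lra. }
  rewrite Hc2. split.
  - eapply Rle_trans; [|apply (spread_ge n x' 0 1); lia].
    destruct (Hval 0%nat ltac:(lia)) as [b0 [Hb0 [E0 _]]].
    destruct (Hval 1%nat ltac:(lia)) as [b1 [Hb1 [E1 _]]].
    rewrite E0, E1, (Hw 0%nat ltac:(lia)), (Hw 1%nat ltac:(lia)). simpl.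
    apply Rabs_le_inv in Hb0. apply Rabs_le_inv in Hb1.
    eapply Rle_trans; [|apply Rle_abs]. nra.
  - apply spread_le; [nra|]. intros i j Hi Hj.
    destruct (Hval i Hi) as [bi [_ [Ei Hbi]]]. destruct (Hval j Hj) as [bj [_ [Ej Hbj]]].
    rewrite Ei, Ej. apply Rabs_le_inv in Hbi. apply Rabs_le_inv in Hbj. apply Rabs_le. lra.
Qed.

Definition CC n r1 d v0 (x : state) : Prop :=
  (exists G s, Clean n r1 x G s) \/ (exists G F, Contact n r1 d (v0 + d) x G F).

Lemma cc_step n r1 d v0 x x' w (W : R -> R) : 0 < d -> 0 < v0 -> d <= v0 / 8 -> v0 <= r1 / 8 ->
  in_cube n x -> CC n r1 d v0 x -> trans n r1 d x x' w ->
  (forall i, (i < n)%nat -> w i = W (mean n (cr r1) x i)) -> (forall y, Rabs (W y) <= v0) ->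
  CC n r1 d v0 x'.
Proof.
  intros Hd Hv Hdv Hvr Hc [[G [s HC]]|[G [F HK]]] Ht Hw HW.
  - destruct (clean_core n r1 d x x' w G s ltac:(lra) ltac:(lra) Hc HC Ht)
      as [mu [k0 [_ [Hsame _]]]].
    destruct (clean_to_cc n r1 d v0 x x' w (W mu) G s ltac:(lra) ltac:(lra) Hc ltac:(lra) ltac:(lra) HC Ht)
      as [H|[F H]]; auto.
    + intros i Hi Gi. rewrite (Hw i Hi). destruct (Hsame i Hi Gi) as [M _]. rewrite M; auto.
    + left. exists G, (2 * d). auto.
    + right. exists G, F. auto.
  - destruct (contact_step n r1 d v0 x x' w G F ltac:(lra) ltac:(lra) Hc ltac:(lra) HK Ht) as [H _].
    + intros i Hi. rewrite (Hw i Hi). apply HW.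
    + left. eexists. eexists. apply H.
Qed.

Lemma cnt_pos n G : cnt n G <> 0%nat -> exists k, (k < n)%nat /\ G k = false.
Proof.
  intros H. unfold cnt in H. destruct (filter (fun j => negb (G j)) (seq 0 n)) as [|k l] eqn:E;
    [simpl in H; congruence|].
  exists k. apply in_nf. rewrite E. left; auto.
Qed.

Lemma cnt_zero n G : cnt n G = 0%nat -> forall j, (j < n)%nat -> G j = true.
Proof.
  intros H j Hj. destruct (G j) eqn:Gj; auto. exfalso.
  assert (Hin : In j (filter (fun j => negb (G j)) (seq 0 n))) by (apply in_nf; auto).
  unfold cnt in H. destruct (filter _ _); [contradiction|simpl in H; lia].
Qed.

Lemma clean_ext n r1 x G G' s : (forall j, (j < n)%nat -> G j = G' j) ->
  Clean n r1 x G s -> Clean n r1 x G' s.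
Proof.
  intros E [C0 [C1 [C2 [C3 [i [j [Hi [Hj [Hij [Gi Gj]]]]]]]]]].
  split; auto. split; [intros a b Ha Hb Ga Gb; rewrite <- E in Ga, Gb by auto; auto|].
  split; [intros a b Ha Hb Ga Gb; rewrite <- E in Ga, Gb by auto; auto|].
  split; [intros a b Ha Hb Ga Gb Hab; rewrite <- E in Ga, Gb by auto; auto|].
  exists i, j. rewrite <- !E by auto. auto.
Qed.

Lemma r1_pos n r1 : (3 <= n)%nat -> 1 / (INR n - 1) <= r1 -> 0 < r1.
Proof.
  intros Hn Hr. assert (HN : 3 <= INR n) by (replace 3 with (INR 3) by (simpl; lra); apply le_INR; lia).
  apply Rlt_le_trans with (1 / (INR n - 1)); auto. unfold Rdiv. apply Rmult_lt_0_compat; [lra|].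
  apply Rinv_0_lt_compat; lra.
Qed.

Lemma phase1 n r1 d v0 K1 (X : nat -> state) : (3 <= n)%nat -> 1 / (INR n - 1) <= r1 -> r1 < 1 ->
  0 < d -> 0 < v0 -> d <= v0 / 8 -> v0 <= r1 / 8 ->
  (forall t, in_cube n (X t)) ->
  (forall t, (t < K1)%nat -> exists w, trans n r1 d (X t) (X (S t)) w /\
        forall i, (i < n)%nat -> w i = clamp v0 (0 - mean n (cr r1) (X t) i)) ->
  1 < INR K1 * (v0 / 4) -> CC n r1 d v0 (X K1).
Proof.
  intros Hn Hr Hr1 Hd Hv Hdv Hvr Hc HX HK.
  assert (Hr0 := r1_pos n r1 Hn Hr).
  assert (Main : forall t, (t <= K1)%nat ->
    (exists th Fr, Inv1 n r1 (X t) th Fr /\ r1 < th /\ th <= 1 - INR t * (v0 / 4)) \/ CC n r1 d v0 (X t)).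
  { induction t as [|t IH]; intros Ht.
    - left. exists 1, (fun _ => false). split; [|simpl; lra].
      split; [intros j Hj _; apply Hc; auto|]. split; intros; discriminate.
    - destruct (HX t ltac:(lia)) as [w [Htr Hw]].
      destruct (IH ltac:(lia)) as [[th [Fr [HI [Hth1 Hth2]]]]|HCC].
      + destruct (normalize n r1 (X t) Hn Hr (Hc t) n th Fr (cnt_le n Fr) HI)
          as [th' [Fr' [HI' [Hle Hcase]]]].
        destruct (Rle_dec th' r1) as [Hsmall|Hbig].
        * right. apply (cc_step n r1 d v0 (X t) (X (S t)) w (fun y => clamp v0 (0 - y))); auto.
          -- left. exists (fun j => negb (Fr' j)), r1. apply (inv1_to_clean n r1 (X t) th' Fr'); auto.
          -- intros; apply clamp_abs; lra.
        * destruct Hcase as [Hsmall|[i [Hi [Fi [Ei Hnb]]]]]; [lra|].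
          assert (HI2 := phase1_step n r1 d v0 (X t) (X (S t)) w th' Fr' i ltac:(lra) ltac:(lra)
                    ltac:(lra) ltac:(lra) (Hc t) HI' ltac:(lra) Hi Fi Ei Hnb Htr Hw).
          destruct (Rle_dec (th' - v0 / 4) r1) as [Hs2|Hb2].
          -- right. left. exists (fun j => negb (Fr' j)), r1.
             apply (inv1_to_clean n r1 (X (S t)) (th' - v0 / 4) Fr'); auto.
          -- left. exists (th' - v0 / 4), Fr'. split; auto. split; [lra|].
             rewrite S_INR. lra.
      + right. apply (cc_step n r1 d v0 (X t) (X (S t)) w (fun y => clamp v0 (0 - y))); auto.
        intros; apply clamp_abs; lra. }
  destruct (Main K1 ltac:(lia)) as [[th [Fr [_ [H1 H2]]]]|H]; auto. lra.
Qed.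

Lemma phase2 n r1 d v0 K1 K2 (X : nat -> state) : (3 <= n)%nat -> 1 / (INR n - 1) <= r1 ->
  0 < d -> 0 < v0 -> d <= v0 / 8 -> v0 <= r1 / 8 ->
  (forall t, in_cube n (X t)) -> CC n r1 d v0 (X K1) ->
  (forall t, (K1 <= t < K1 + K2)%nat -> exists w, trans n r1 d (X t) (X (S t)) w /\
        forall i, (i < n)%nat -> w i = clamp v0 (1 - mean n (cr r1) (X t) i)) ->
  1 + 2 * v0 * INR n < INR K2 * (v0 / 4) ->
  exists s, Clean n r1 (X (K1 + K2)%nat) (fun _ => true) s.
Proof.
  intros Hn Hr Hd Hv Hdv Hvr Hc H0 HX HK.
  assert (Hr0 := r1_pos n r1 Hn Hr).
  set (q := v0 / 4).
  assert (Main : forall t, (t <= K2)%nat -> exists G,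
     ((exists s, Clean n r1 (X (K1 + t)%nat) G s) \/ (exists F, Contact n r1 d (v0 + d) (X (K1 + t)%nat) G F)) /\
     (cnt n G = 0%nat \/ forall i, (i < n)%nat -> G i = true ->
        INR t * q + 2 * v0 * INR (cnt n G) - 2 * v0 * INR n <= X (K1 + t)%nat i)).
  { induction t as [|t IH]; intros Ht.
    - rewrite Nat.add_0_r.
      assert (Hb : forall G, cnt n G = 0%nat \/ forall i, (i < n)%nat -> G i = true ->
        INR 0 * q + 2 * v0 * INR (cnt n G) - 2 * v0 * INR n <= X K1 i).
      { intros G. right. intros i Hi _. assert (HL := le_INR _ _ (cnt_le n G)).
        assert (0 <= X K1 i) by (apply Hc; auto). simpl. nra. }
      destruct H0 as [[G [s HC]]|[G [F HK']]]; exists G; split; auto.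
      + left; eauto.
      + right; eauto.
    - destruct (IH ltac:(lia)) as [G [Hst Hprog]].
      replace (K1 + S t)%nat with (S (K1 + t)) by lia.
      destruct (HX (K1 + t)%nat ltac:(lia)) as [w [Htr Hw]].
      set (Y := X (K1 + t)%nat) in *. set (Y' := X (S (K1 + t))) in *.
      destruct Hst as [[s HC]|[F HK']].
      + destruct (clean_core n r1 d Y Y' w G s ltac:(lra) ltac:(lra) (Hc _) HC Htr)
          as [mu [k0 [_ [Hsame _]]]].
        exists G. split.
        * destruct (clean_to_cc n r1 d v0 Y Y' w (clamp v0 (1 - mu)) G s ltac:(lra) ltac:(lra) (Hc _)
             ltac:(lra) ltac:(lra) HC Htr) as [H|[F H]].
          -- intros i Hi Gi. rewrite (Hw i Hi). destruct (Hsame i Hi Gi) as [M _]. rewrite M; auto.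
          -- apply clamp_abs; lra.
          -- left; eauto.
          -- right; eauto.
        * destruct Hprog as [H|H]; [left; auto|].
          destruct (Nat.eq_dec (cnt n G) 0) as [H0'|Hne]; [left; auto|right].
          intros i Hi Gi.
          assert (A := clean_prog n r1 d v0 Y Y' w G s ltac:(lra) ltac:(lra) ltac:(lra) ltac:(lra)
                    (Hc _) HC Htr Hw (cnt_pos n G Hne) _ H i Hi Gi).
          rewrite S_INR. fold q in A. lra.
      + destruct (contact_step n r1 d v0 Y Y' w G F ltac:(lra) ltac:(lra) (Hc _) ltac:(lra) HK' Htr)
          as [HC' Hlow].
        { intros i Hi. rewrite (Hw i Hi). apply clamp_abs; lra. }
        exists (fun j => G j || Nat.eqb j F). split; [left; eauto|].
        assert (HKc := HK'). destruct HKc as [_ [HF [GF _]]].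
        assert (Ec := cnt_dec n G F HF GF).
        destruct (Nat.eq_dec (cnt n (fun j => G j || Nat.eqb j F)) 0) as [Z|Z]; [left; auto|right].
        destruct Hprog as [Hp|Hp]; [rewrite Ec in Hp; discriminate|].
        intros a Ha Ga. assert (A := Hlow _ Hp a Ha Ga).
        rewrite Ec, S_INR in A. rewrite S_INR. fold q in A |- *. unfold q in *. lra. }
  destruct (Main K2 ltac:(lia)) as [G [Hst Hprog]].
  assert (Hz : cnt n G = 0%nat).
  { destruct Hprog as [H|H]; auto. exfalso.
    assert (Hm : exists i, (i < n)%nat /\ G i = true).
    { destruct Hst as [[s [_ [_ [_ [_ [i [_ [Hi [_ [_ [Gi _]]]]]]]]]]]|[F [_ [_ [_ [_ [_ [_ [_ [i [_ [Hi [_ [_ [Gi _]]]]]]]]]]]]]]]; eauto. }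
    destruct Hm as [i [Hi Gi]]. specialize (H i Hi Gi).
    assert (HL := le_INR _ _ (cnt_le n G)). assert (0 <= INR (cnt n G)) by apply pos_INR.
    assert (X (K1 + K2)%nat i <= 1) by (apply Hc; auto). unfold q in H. nra. }
  destruct Hst as [[s HC]|[F HK']].
  - exists s. apply (clean_ext n r1 _ G); auto. intros j Hj. apply (cnt_zero n G Hz j Hj).
  - exfalso. destruct HK' as [_ [HF [GF _]]]. rewrite (cnt_zero n G Hz F HF) in GF. discriminate.
Qed.

Lemma phase3 n r1 d v0 K0 K3 (X : nat -> state) s0 :
  0 < d -> 0 < v0 -> d <= v0 / 8 -> v0 <= r1 / 8 ->
  (forall t, in_cube n (X t)) -> Clean n r1 (X K0) (fun _ => true) s0 ->
  (forall t, (K0 <= t < K0 + K3)%nat -> exists w, trans n r1 d (X t) (X (S t)) w /\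
        forall i, (i < n)%nat -> w i = clamp v0 (/ 2 - mean n (cr r1) (X t) i)) ->
  / 2 < INR K3 * d ->
  exists s, Clean n r1 (X (K0 + K3)%nat) (fun _ => true) s /\
    forall i, (i < n)%nat -> Rabs (X (K0 + K3)%nat i - / 2) <= 4 * d.
Proof.
  intros Hd Hv Hdv Hvr Hc H0 HX HK.
  assert (Main : forall t, (t <= K3)%nat -> exists s, Clean n r1 (X (K0 + t)%nat) (fun _ => true) s /\
    forall i, (i < n)%nat -> Rabs (X (K0 + t)%nat i - / 2) <= Rmax (4 * d) (/ 2 - INR t * d)).
  { induction t as [|t IH]; intros Ht.
    - rewrite Nat.add_0_r. exists s0. split; auto. intros i Hi.
      assert (A := Hc K0 i Hi). simpl. apply Rle_trans with (/ 2); [apply Rabs_le; lra|].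
      replace (/ 2 - 0 * d) with (/ 2) by ring. apply Rmax_r.
    - destruct (IH ltac:(lia)) as [s [HC HD]].
      replace (K0 + S t)%nat with (S (K0 + t)) by lia.
      destruct (HX (K0 + t)%nat ltac:(lia)) as [w [Htr Hw]].
      set (D := Rmax (4 * d) (/ 2 - INR t * d)) in *.
      assert (HD0 : 4 * d <= D) by apply Rmax_l.
      destruct (phase3_step n r1 d v0 _ _ w s D ltac:(lra) ltac:(lra) ltac:(lra) ltac:(lra) (Hc _) HC Htr Hw
                 ltac:(lra) HD) as [HC' HD'].
      exists (2 * d). split; auto. intros i Hi. eapply Rle_trans; [apply HD'; auto|].
      rewrite S_INR. unfold D. unfold Rmax. repeat destruct Rle_dec; lra. }
  destruct (Main K3 ltac:(lia)) as [s [HC HD]]. exists s. split; auto.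
  intros i Hi. eapply Rle_trans; [apply HD; auto|]. unfold Rmax. destruct Rle_dec; lra.
Qed.

Lemma traj_S n r x0 u b t : traj n r x0 u b (S t) =
  step n r (traj n r x0 u b t) (u t (hist n r x0 u b t)) (b t).
Proof. unfold traj. cbn [hist]. rewrite (proj2 (Nat.leb_gt (S t) t) ltac:(lia)). reflexivity. Qed.

Definition ctrl (K1 K2 K3 n : nat) (r1 v0 eta d : R) (t : nat) (x : state) (i : nat) : R :=
  if (t <? K1)%nat then clamp v0 (0 - mean n (cr r1) x i)
  else if (t <? K1 + K2)%nat then clamp v0 (1 - mean n (cr r1) x i)
  else if (t <? K1 + K2 + K3)%nat then clamp v0 (/ 2 - mean n (cr r1) x i)
  else if Nat.eqb i 0 then eta - d else if Nat.eqb i 1 then - (eta - d) else 0.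

Theorem lemma11 (n : nat) (r1 eta : R) :
  (3 <= n)%nat ->
  0 < eta ->
  1 / (INR n - 1) <= r1 < 1 ->
  eta <= INR n * r1 / (2 * (INR n - 1)) ->
  forall eps : R, 0 < eps ->
    robustly_reachable n (fun _ => r1) eta (E' n eta eps).
Proof.
  intros Hn Heta [Hr Hr1] Hetab eps Heps.
  assert (Hr0 := r1_pos n r1 Hn Hr).
  set (v0 := Rmin (eta / 2) (r1 / 8)).
  assert (Hv1 : v0 <= eta / 2) by apply Rmin_l.
  assert (Hv2 : v0 <= r1 / 8) by apply Rmin_r.
  assert (Hv0 : 0 < v0) by (apply Rmin_glb_lt; lra).
  set (d := Rmin (v0 / 8) (Rmin (eps / 8) ((1 - r1) / 16))).
  assert (Hd1 : d <= v0 / 8) by apply Rmin_l.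
  assert (Hd2 : d <= eps / 8) by (eapply Rle_trans; [apply Rmin_r|apply Rmin_l]).
  assert (Hd3 : d <= (1 - r1) / 16) by (eapply Rle_trans; [apply Rmin_r|apply Rmin_r]).
  assert (Hd0 : 0 < d) by (apply Rmin_glb_lt; [lra|apply Rmin_glb_lt; lra]).
  destruct (INR_archimed (v0 / 4) 1 ltac:(lra)) as [K1 HK1].
  destruct (INR_archimed (v0 / 4) (1 + 2 * v0 * INR n) ltac:(lra)) as [K2 HK2].
  destruct (INR_archimed d (/ 2) ltac:(lra)) as [K3 HK3].
  set (T := (K1 + K2 + K3 + 1)%nat).
  exists T. split; [unfold T; lia|]. exists d. split; [lra|].
  intros x0 Hx0. right.
  set (u := fun (t : nat) (h : nat -> state) (j i : nat) => ctrl K1 K2 K3 n r1 v0 eta d t (h t) i).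
  exists (fun _ _ _ => d), u. split.
  { intros t h i j Ht Hi Hj. split; [lra|]. unfold u, ctrl.
    destruct (t <? K1)%nat; [|destruct (t <? K1 + K2)%nat; [|destruct (t <? K1 + K2 + K3)%nat]];
      try (assert (A := clamp_abs v0 (0 - mean n (cr r1) (h t) i) ltac:(lra));
           assert (B := clamp_abs v0 (1 - mean n (cr r1) (h t) i) ltac:(lra));
           assert (C := clamp_abs v0 (/ 2 - mean n (cr r1) (h t) i) ltac:(lra));
           apply Rabs_le_inv in A; apply Rabs_le_inv in B; apply Rabs_le_inv in C; lra).
    destruct (Nat.eqb i 0); [lra|destruct (Nat.eqb i 1); lra]. }
  intros b Hb. exists T. split; [unfold T; lia|].
  set (X := traj n (fun _ => r1) x0 u b).
  assert (Hcube : forall t, in_cube n (X t)).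
  { intros [|t]; [exact Hx0|]. unfold X. rewrite traj_S. intros i Hi. unfold step. apply proj01_in. }
  assert (Htr : forall t, (t < T)%nat -> trans n r1 d (X t) (X (S t)) (ctrl K1 K2 K3 n r1 v0 eta d t (X t))).
  { intros t Ht. unfold X at 2. rewrite traj_S. fold X.
    change (fun _ : nat => r1) with (cr r1).
    apply trans_of_step; [lra|]. intros i j Hi Hj. split; [reflexivity|].
    assert (A := Hb t i j Ht Hi Hj). apply Rabs_le. exact A. }
  assert (HP1 : CC n r1 d v0 (X K1)).
  { apply (phase1 n r1 d v0 K1 X); auto; try lra.
    intros t Ht. exists (ctrl K1 K2 K3 n r1 v0 eta d t (X t)). split; [apply Htr; unfold T; lia|].
    intros i Hi. unfold ctrl. rewrite (proj2 (Nat.ltb_lt t K1) Ht). reflexivity. }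
  destruct (phase2 n r1 d v0 K1 K2 X Hn Hr ltac:(lra) ltac:(lra) ltac:(lra) ltac:(lra) Hcube HP1) as [s2 HC2].
  { intros t Ht. exists (ctrl K1 K2 K3 n r1 v0 eta d t (X t)). split; [apply Htr; unfold T; lia|].
    intros i Hi. unfold ctrl. rewrite (proj2 (Nat.ltb_ge t K1) ltac:(lia)).
    rewrite (proj2 (Nat.ltb_lt t (K1 + K2)) ltac:(lia)). reflexivity. }
  { lra. }
  destruct (phase3 n r1 d v0 (K1 + K2) K3 X s2 ltac:(lra) ltac:(lra) ltac:(lra) ltac:(lra) Hcube HC2)
    as [s3 [HC3 HD3]].
  { intros t Ht. exists (ctrl K1 K2 K3 n r1 v0 eta d t (X t)). split; [apply Htr; unfold T; lia|].
    intros i Hi. unfold ctrl. rewrite (proj2 (Nat.ltb_ge t K1) ltac:(lia)).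
    rewrite (proj2 (Nat.ltb_ge t (K1 + K2)) ltac:(lia)).
    rewrite (proj2 (Nat.ltb_lt t (K1 + K2 + K3)) ltac:(lia)). reflexivity. }
  { lra. }
  replace T with (S (K1 + K2 + K3)) by (unfold T; lia). fold X.
  apply (final_step n r1 eta d eps (X (K1 + K2 + K3)%nat) _ (ctrl K1 K2 K3 n r1 v0 eta d (K1 + K2 + K3) (X (K1 + K2 + K3)%nat)) s3);
    auto; try lra.
  - apply Htr. unfold T; lia.
  - intros i Hi. unfold ctrl.
    rewrite (proj2 (Nat.ltb_ge (K1 + K2 + K3) K1) ltac:(lia)).
    rewrite (proj2 (Nat.ltb_ge (K1 + K2 + K3) (K1 + K2)) ltac:(lia)).
    rewrite (proj2 (Nat.ltb_ge (K1 + K2 + K3) (K1 + K2 + K3)) ltac:(lia)). reflexivity.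
Qed.
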